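(* Let $K,D,U$ be integers with $0\le U\le D$ and $U+D\le K-2$, and let $\mathbb{F}_q$ be any finite field. Consider the two-sided single unicast index coding problem with symmetric neighboring and consecutive side-information with $K$ messages $x_0,\dots,x_{K-1}$ and $K$ receivers $R_0,\dots,R_{K-1}$, where $R_k$ wants $x_k$ and has side-information $$\mathcal{K}_k=\{x_{k-U},\dots,x_{k-1}\}\cup\{x_{k+1},\dots,x_{k+D}\}$$ (indices modulo $K$). Let $$a=\gcd(K,\,D-U,\,U+1),\qquad u_a=\frac{U+1}{a},\qquad \Delta_a=\frac{D-U}{a},\qquad K_a=\frac{K}{a}.$$ Let each message be a vector $x_k=(x_{k,1},\dots,x_{k,u_a})\in\mathbb{F}_q^{u_a}$. For $s\in[0:K_a-1]$ define $$y_s=\sum_{i=1}^{u_a}\sum_{j=0}^{a-1}x_{a(s+1-i)+j,\,i}\in\mathbb{F}_q$$ (first subscripts modulo $K$). Let $\mathbf{L}$ be the AIR matrix of size $K_a\times(K_a-\Delta_a)$ and $L_s$ its $s$-th row ($s\in[0:K_a-1]$). Then the code $$[c_0~c_1~\cdots~c_{K_a-\Delta_a-1}]=\sum_{s=0}^{K_a-1}y_sL_s$$ is an optimal length $u_a$-dimensional vector linear index code for this problem: every receiver $R_k$ can decode its wanted message vector $x_k$ from the $K_a-\Delta_a$ broadcast symbols $c_0,\dots,c_{K_a-\Delta_a-1}$ and its side-information, and the code achieves rate $\frac{u_a}{K_a-\Delta_a}=\frac{U+1}{K-D+U}$, which equals the symmetric capacity of the problem.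
   Context: Index coding: a transmitter holds messages $x_0,\dots,x_{K-1}$, each $x_k\in\mathbb{F}_q^{p}$ (a $p$-dimensional vector index code; $p=1$ is scalar). A linear index code of length $N$ is an $\mathbb{F}_q$-linear map $\mathbb{F}_q^{pK}\to\mathbb{F}_q^{N}$; its image symbols $c_0,\dots,c_{N-1}$ are broadcast over a noiseless channel. Receiver $R_k$ decodes if $x_k$ is determined (linearly) by the broadcast symbols together with the messages in its side-information set $\mathcal{K}_k$. The rate is $p/N$. For the problem above with $U+D\le K-2$, the symmetric capacity is $\frac{U+1}{K-D+U}$ symbols per message, and an index code is of optimal length if its rate equals this capacity. AIR matrix: for integers $m\ge n\ge 1$, the $m\times n$ binary matrix $\mathbf{L}_{m\times n}$ (entries $0,1$ regarded in $\mathbb{F}_q$) is built as follows. For $d\mid c$, let $\mathbf{I}_{c\times d}$ be the $c\times d$ matrix consisting of $c/d$ copies of the identity $\mathbf{I}_d$ stacked vertically, and $\mathbf{I}_{d\times c}$ its transpose. Start with an empty $m\times n$ matrix whose ''unfilled part'' is the whole matrix, of size $m\times n$. Step 1: write $m=qn+r$ with $0\le r<n$; fill the first $qn$ rows of the unfilled part with $\mathbf{I}_{qn\times n}$; the unfilled part is now its last $r$ rows (size $r\times n$); if $r=0$ stop. Step 2: write $n=q'r+r'$ with $0\le r'<r$; fill the first $q'r$ columns of the unfilled part with $\mathbf{I}_{r\times q'r}$ (i.e. $q'$ copies of $\mathbf{I}_r$ side by side); the unfilled part is now its last $r'$ columns (size $r\times r'$); if $r'=0$ stop; otherwise set $m\leftarrow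 r$, $n\leftarrow r'$ and return to Step 1. The resulting matrix is the AIR matrix of size $m\times n$. *)

(* Defs.v *)
From mathcomp Require Import all_boot all_order all_algebra.
Set Implicit Arguments. Unset Strict Implicit. Unset Printing Implicit Defensive.
Import GRing.Theory.

(* ---------- AIR matrix ----------
   air_aux fuel m n i j = entry (i,j) of the m x n AIR matrix (m >= n >= 1),
   following the two-step construction of the paper literally:
   Step 1: m = q n + r; rows i < q n are copies of I_n (entry 1 iff i mod n = j);
           remaining r rows form the unfilled part.
   Step 2: n = q' r + r'; in the unfilled part (row i' = i - q n), columns
           j < q' r are copies of I_r (entry 1 iff j mod r = i'); the remaining
           r x r' block is filled recursively with m := r, n := r'.
   Fuel m suffices since m strictly decreases at each recursion. *)
Fixpoint air_aux (fuel m n i j : nat) : bool :=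
  match fuel with
  | 0 => false
  | f.+1 =>
    if n == 0%N then false else
    if (i < (m %/ n) * n)%N then (i %% n == j) else
    let r := (m %% n)%N in
    let i' := (i - (m %/ n) * n)%N in
    if r == 0%N then false else
    if (j < (n %/ r) * r)%N then (j %% r == i') else
    air_aux f r (n %% r) i' (j - (n %/ r) * r)
  end.

Local Open Scope ring_scope.

Definition AIR (F : nzRingType) (m n : nat) : 'M[F]_(m, n) :=
  \matrix_(i < m, j < n) (air_aux m m n i j)%:R.

Definition a_par (K D U : nat) : nat := gcdn K (gcdn (D - U) U.+1).
Definition u_a (K D U : nat) : nat := (U.+1 %/ a_par K D U)%N.
Definition Delta_a (K D U : nat) : nat := ((D - U) %/ a_par K D U)%N.
Definition K_a (K D U : nat) : nat := (K %/ a_par K D U)%N.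
Definition N_len (K D U : nat) : nat := (K_a K D U - Delta_a K D U)%N.

(* message with index taken modulo K (K > 0 in the theorem, so insub succeeds) *)
Definition xat (F : nzRingType) (K p : nat) (x : 'I_K -> 'rV[F]_p) (n : nat)
  : 'rV[F]_p :=
  if @insub _ (fun i => (i < K)%N) 'I_K (n %% K)%N is Some i then x i else 0.

(* y_s = sum_{i=1}^{u_a} sum_{j=0}^{a-1} x_{a(s+1-i)+j, i}; with the 0-based
   column index i' = i-1 the first subscript is a(s - i') + j (mod K).
   Since a*i' < U+1 <= K, adding K keeps it in nat. *)
Definition y_sym (F : nzRingType) (K D U : nat)
  (x : 'I_K -> 'rV[F]_(u_a K D U)) (s : nat) : F :=
  \sum_(i < u_a K D U) \sum_(j < a_par K D U)
     xat x (K + a_par K D U * s + j - a_par K D U * i)%N 0 i.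

Definition code (F : nzRingType) (K D U : nat)
  (x : 'I_K -> 'rV[F]_(u_a K D U)) : 'rV[F]_(N_len K D U) :=
  \sum_(s < K_a K D U) y_sym x s *: row s (AIR F (K_a K D U) (N_len K D U)).

Definition side (K D U : nat) (k : 'I_K) : {set 'I_K} :=
  [set j : 'I_K | [exists t : 'I_U.+1, (0 < t)%N && (val j == (k + K - t) %% K)%N]
               || [exists t : 'I_D.+1, (0 < t)%N && (val j == (k + t) %% K)%N]].

Definition decodable (F : nzRingType) (K D U : nat) (k : 'I_K) : Prop :=
  exists (Dm : 'M[F]_(N_len K D U, u_a K D U))
         (E : 'I_K -> 'M[F]_(u_a K D U, u_a K D U)),
  forall x : 'I_K -> 'rV[F]_(u_a K D U),
    x k = code x *m Dm + \sum_(j in side D U k) x j *m E j.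

(* Main.v *)
Require Import Defs.
From mathcomp Require Import all_boot all_order all_algebra zify.
Set Implicit Arguments. Unset Strict Implicit. Unset Printing Implicit Defensive.
Import GRing.Theory.
Local Open Scope ring_scope.

Section Indep.
Variable F : nzRingType.

Definition indep (M : nat -> nat -> F) (b : nat) (P Q : pred nat) :=
  forall y : nat -> F, (forall j, Q j -> \sum_(i < b | P i) y i * M i j = 0) ->
  forall i, (i < b)%N -> P i -> y i = 0.

Lemma indep_priv M b (P Q : pred nat) :
  (forall i, (i < b)%N -> P i -> exists2 j, Q j &
      (M i j = 1 /\ forall i', (i' < b)%N -> P i' -> i' != i -> M i' j = 0)) ->
  indep M b P Q.
Proof.
move=> H y Hy i ib Pi; have [j Qj [M1 M0]] := H i ib Pi.
have := Hy j Qj; rewrite (bigD1 (Ordinal ib)) //= big1 ?M1 ?mulr1 ?addr0 //.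
move=> k /andP[Pk nk]; rewrite M0 ?mulr0 //; apply: contra nk => /eqP e.

Qed.

Lemma indep_split M b (P A Q Q2 : pred nat) :
  (forall i j, (i < b)%N -> P i -> A i -> Q2 j -> M i j = 0) ->
  (forall j, Q2 j -> Q j) ->
  indep M b (predI P (predC A)) Q2 -> indep M b (predI P A) Q -> indep M b P Q.
Proof.
move=> H0 HQ I2 I1 y Hy.
have Y2 : forall i, (i < b)%N -> P i -> ~~ A i -> y i = 0.
  move=> i ib Pi nA; apply: (I2 y) => //= [j Qj|]; last by rewrite Pi.
  have := Hy j (HQ j Qj); rewrite (bigID (fun i : 'I_b => A i)) /=.
  rewrite [X in X + _]big1 ?add0r //.
  by move=> k /andP[Pk Ak]; rewrite (H0 _ _ (ltn_ord k) Pk Ak Qj) mulr0.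
have Y1 : forall i, (i < b)%N -> P i -> A i -> y i = 0.
  move=> i ib Pi nA; apply: (I1 y) => //= [j Qj|]; last by rewrite Pi.
  have := Hy j Qj; rewrite (bigID (fun i : 'I_b => A i)) /=.
  rewrite [X in _ + X]big1 ?addr0 //.
  by move=> k /andP[Pk Ak]; rewrite (Y2 _ (ltn_ord k) Pk Ak) mul0r.
move=> i ib Pi; case Ai: (A i); [exact: Y1|by apply: Y2; rewrite ?Ai].
Qed.

Lemma indep_transfer M M' b (P P' Q Q' : pred nat) :
  indep M b P Q ->
  (forall i, (i < b)%N -> P' i = P i) -> (forall j, Q j -> Q' j) ->
  (forall i j, (i < b)%N -> P i -> Q j -> M' i j = M i j) ->
  indep M' b P' Q'.
Proof.
move=> I HP HQ HM y Hy i ib Pi; apply: (I y) => //; last by rewrite -HP.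
move=> j Qj; rewrite -[RHS](Hy j (HQ j Qj)).
rewrite [RHS](eq_bigl (fun k : 'I_b => P k)); last by move=> k; rewrite HP.
by apply: eq_bigr => k Pk; rewrite HM.
Qed.

Lemma indep_shift M M' b a c (P Q : pred nat) :
  indep M b P Q ->
  (forall i j, (i < b)%N -> P i -> Q j -> M' (a + i)%N (c + j)%N = M i j) ->
  indep M' (a + b) (fun i => (a <= i)%N && P (i - a)%N)
                   (fun j => (c <= j)%N && Q (j - c)%N).
Proof.
move=> I HM y Hy i ib /andP[ai Pi].
have -> : i = (a + (i - a))%N by rewrite subnKC.
apply: (I (fun k => y (a + k)%N)) => //; last by rewrite ltn_subLR.
move=> j Qj; have := Hy (c + j)%N; rewrite leq_addr addKn => /(_ Qj).
rewrite big_split_ord /= big1 ?add0r; last first.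
  by move=> k /andP[]; rewrite leqNgt ltn_ord.
move=> E; rewrite -[RHS]E; apply: eq_big => k /=; first by rewrite leq_addr addKn.
by move=> Pk; rewrite HM.
Qed.

Lemma indep_corner M b w (P Q : pred nat) :
  (w <= b)%N ->
  (forall i j, (i < w)%N -> (j < w)%N -> M i j = (i == j)%:R) ->
  (forall i j, (i < w)%N -> Q j -> M i j = 0) ->
  (forall i, P i -> (w <= i)%N) ->
  (forall j, Q j -> (w <= j)%N) ->
  indep M b (fun i => (i < w)%N || P i) (fun j => (j < w)%N || Q j) ->
  indep M b P Q.
Proof.
move=> wb Hid H0 HP HQ I y Hy.
pose y' i := if (i < w)%N then - \sum_(i' < b | P i') y i' * M i' i else y i.
have E : forall j, \sum_(i < b | (i < w)%N || P i) y' i * M i j =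
   \sum_(i < b | (i < w)%N) y' i * M i j + \sum_(i < b | P i) y i * M i j.
  move=> j; rewrite (bigID (fun i : 'I_b => (i < w)%N)) /=; congr (_ + _).
    by apply: eq_bigl => k; case: (k < w)%N; rewrite ?andbF.
  apply: eq_big => k.
    case: (ltnP k w) => kw /=; rewrite ?andbF ?andbT //.
    by apply/esym/negbTE; apply: contraL kw => /HP; rewrite -leqNgt.
  move=> /andP[_]; rewrite /y' => /negbTE -> //.
move=> i ib Pi.
have Hi : y i = y' i by rewrite /y' ltnNge (HP _ Pi).
rewrite Hi; apply: (I y') => //; last by rewrite Pi orbT.
move=> j /orP[jw|Qj]; rewrite E.
  rewrite (bigD1 (Ordinal (leq_trans jw wb))) //= big1.
    by rewrite /y' jw Hid // eqxx mulr1 addr0 addNr.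
  move=> k /andP[kw nk]; rewrite Hid //; case: eqP => [e|]; last by rewrite mulr0.
  by case/eqP: nk; apply: val_inj.
rewrite big1 ?add0r ?Hy //.
by move=> k kw; rewrite H0 ?mulr0.
Qed.

End Indep.
Local Close Scope ring_scope.
Lemma air_fuel f1 f2 m n i j : n <= m -> m <= f1 -> m <= f2 ->
  air_aux f1 m n i j = air_aux f2 m n i j.
Proof.
elim: f1 f2 m n i j => [|f1 IH] [|f2] m n i j nm mf1 mf2 //=.
- by have -> : n = 0 by lia.
- by have -> : n = 0 by lia.
case: eqP => // /eqP n0.
case: ifP => // _; case: eqP => // /eqP r0; case: ifP => // _.
apply: IH.
- by apply: ltnW; rewrite ltn_mod lt0n.
- have : m %% n < n by rewrite ltn_mod lt0n.
  lia.
- have : m %% n < n by rewrite ltn_mod lt0n.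
  lia.
Qed.

Definition A m n i j := air_aux m m n i j.

Lemma A_top m n i j : 0 < n -> i < m %/ n * n -> A m n i j = (i %% n == j).
Proof.
rewrite /A; case: m => [|m] n0 /=; first by rewrite div0n.
by rewrite eqn0Ngt n0 /= => ->.
Qed.

Lemma A_bot1 m n i j : 0 < n -> m %/ n * n <= i -> 0 < m %% n ->
  j < n %/ (m %% n) * (m %% n) ->
  A m n i j = (j %% (m %% n) == i - m %/ n * n).
Proof.
rewrite /A; case: m => [|m] n0 /=; first by rewrite mod0n.
rewrite eqn0Ngt n0 /= => ti r0; rewrite (ltnNge i) ti /= eqn0Ngt r0 /= => -> //.
Qed.

Lemma A_bot2 m n i j : 0 < n -> n <= m -> m %/ n * n <= i -> 0 < m %% n ->
  n %/ (m %% n) * (m %% n) <= j ->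
  A m n i j = A (m %% n) (n %% (m %% n)) (i - m %/ n * n) (j - n %/ (m %% n) * (m %% n)).
Proof.
rewrite /A; case: m => [|m] n0 nm /=; first by rewrite mod0n.
rewrite eqn0Ngt n0 /= => ti r0; rewrite (ltnNge i) ti /= eqn0Ngt r0 /= ltnNge => -> /=.
apply: air_fuel.
- by apply: ltnW; rewrite ltn_mod.
- have : m.+1 %% n < n by rewrite ltn_mod.
  lia.
- by [].
Qed.

Section Air.
Variable F : nzRingType.
Local Open Scope ring_scope.

Definition Mx m n i j : F := (A m n i j)%:R.
Definition inW m t n i := ((i < m) && ((i + m - t) %% m < n))%N.

Lemma inW_char m t n i : (t < m)%N -> (n <= m)%N ->
  inW m t n i = ((i < m) && ((t <= i < t + n) || (i + m < t + n)))%N.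
Proof.
move=> tm nm; rewrite /inW; case: (ltnP i m) => im //=.
case: (leqP t i) => ti /=.
  have -> : (i + m - t = 1 * m + (i - t))%N by lia.
  rewrite modnMDl modn_small; lia.
rewrite modn_small; lia.
Qed.

Lemma indep_empty (M : nat -> nat -> F) b (P Q : pred nat) : (forall i, (i < b)%N -> P i -> False) ->
  indep M b P Q.
Proof. by move=> H y _ i ib Pi; case: (H i ib Pi). Qed.

Lemma modn_blk c n i : (c * n <= i)%N -> (i < c * n + n)%N -> (i %% n = i - c * n)%N.
Proof.
move=> h1 h2; have -> : i = (c * n + (i - c * n))%N by rewrite subnKC.
rewrite modnMDl modn_small; lia.
Qed.


Lemma modn_blk2 q r j : (0 < q)%N -> (q * r - r <= j)%N -> (j < q * r)%N ->
  (j %% r = j - (q * r - r))%N.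
Proof.
move=> q0 h1 h2; have e : (q * r - r = q.-1 * r)%N by rewrite -subn1 mulnBl mul1n.
rewrite e; apply: modn_blk; first by rewrite -e.
have : (q.-1 * r + r = q * r)%N by rewrite -e subnK // leq_pmull.
lia.
Qed.

Section Bottom.
Variables m n : nat.
Hypotheses (n0 : (0 < n)%N) (nm : (n <= m)%N) (r0 : (0 < m %% n)%N).
Let T := (m %/ n * n)%N.
Let r := (m %% n)%N.
Let Qr := (n %/ r * r)%N.
Let r' := (n %% r)%N.
Let M := Mx m n.
Let M' := Mx r r'.

Lemma mE : m = (T + r)%N. Proof. by rewrite /T /r -divn_eq. Qed.
Lemma nE : n = (Qr + r')%N. Proof. by rewrite /Qr /r' -divn_eq. Qed.
Lemma rn : (r < n)%N. Proof. by rewrite /r ltn_mod. Qed.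
Lemma r'r : (r' < r)%N. Proof. by rewrite /r' ltn_mod. Qed.
Lemma q'0 : (0 < n %/ r)%N. Proof. by rewrite divn_gt0 // ltnW // rn. Qed.
Lemma rQr : (r <= Qr)%N. Proof. by rewrite /Qr leq_pmull // q'0. Qed.
Lemma nT : (n <= T)%N.
Proof. by rewrite /T leq_pmull // divn_gt0. Qed.

Lemma Mtop i j : (i < T)%N -> M i j = (i %% n == j)%N%:R.
Proof. by move=> h; rewrite /M /Mx A_top. Qed.
Lemma MB1 i j : (T <= i)%N -> (j < Qr)%N -> M i j = (j %% r == i - T)%N%:R.
Proof. by move=> h1 h2; rewrite /M /Mx A_bot1. Qed.
Lemma MB2 i j : (T <= i)%N -> (Qr <= j)%N -> M i j = M' (i - T)%N (j - Qr)%N.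
Proof. by move=> h1 h2; rewrite /M /M' /Mx A_bot2. Qed.
Lemma M'top i j : (i < r')%N -> M' i j = (i == j)%:R.
Proof.
move=> h; have rr := r'r.
have r'0 : (0 < r')%N by lia.
rewrite /M' /Mx A_top // ?modn_small //.
apply: leq_trans h _; rewrite leq_pmull // divn_gt0 // ltnW //.
Qed.


Lemma modQ j : (Qr - r <= j)%N -> (j < Qr)%N -> (j %% r = j - (Qr - r))%N.
Proof. by move=> h1 h2; rewrite (@modn_blk2 (n %/ r)) // q'0. Qed.

Lemma Sa g : (g < r)%N ->
  indep M m (fun i => (T <= i < T + g)%N) (fun j => (j < g)%N).
Proof.
move=> gr; have := rQr; move=> rq.
apply: indep_priv => i im /andP[h1 h2]; exists (i - T)%N; first lia.
split.
  by rewrite MB1 //; [rewrite modn_small ?eqxx //; lia | lia].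
move=> i' i'm /andP[h3 h4] ne; rewrite MB1 //; last lia.
by rewrite modn_small; [rewrite (_ : (_ == _) = false) //; apply/eqP; lia| lia].
Qed.

Lemma Sb b : (b + r <= n)%N ->
  indep M m (fun i => (T <= i)%N) (fun j => (b <= j < b + r)%N).
Proof.
move=> bn; have rq := rQr; have ne := nE; have me := mE; have rr := r'r.
have q0 := q'0.
case: (leqP (b + r) Qr) => bq.
  apply: indep_priv => i im h1.
  have hr : (0 < r)%N by [].
  pose j := (b + ((i - T) + r - b %% r) %% r)%N.
  have jr : (j %% r = i - T)%N.
    rewrite /j modnDmr.
    have e : (b + (i - T + r - b %% r) = (b %/ r + 1) * r + (i - T))%N.
      have := divn_eq b r; have := ltn_mod b r; rewrite hr; lia.
    rewrite e modnMDl modn_small //; lia.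
  have jl : (j < b + r)%N by rewrite /j ltn_add2l ltn_mod.
  exists j; first by rewrite /j leq_addr jl.
  split.
    rewrite MB1 ?jr ?eqxx //; lia.
  move=> i' i'm h2 ne'; rewrite MB1 ?jr //; last lia.
  by rewrite (_ : (_ == _) = false) //; apply/eqP; lia.
pose w := (b + r - Qr)%N.
have we : (w = b + r - Qr)%N by [].
apply: (indep_split (A := fun i => (i < T + w)%N) (Q2 := fun j => (b <= j < Qr)%N)).
- move=> i j im /= h1 h2 /andP[h3 h4]; rewrite MB1 //.
  rewrite modQ //; last lia.
  by rewrite (_ : (_ == _) = false) //; apply/eqP; lia.
- move=> j /andP[h1 h2]; lia.
- apply: indep_priv => i im /= /andP[h1 h2]; exists (Qr - r + (i - T))%N; first lia.
  have jr : ((Qr - r + (i - T)) %% r = i - T)%N.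
    rewrite modQ //; lia.
  split; first by rewrite MB1 ?jr ?eqxx //; lia.
  move=> i' i'm /andP[h3 h4] ne'; rewrite MB1 ?jr //; last lia.
  by rewrite (_ : (_ == _) = false) //; apply/eqP; lia.
- apply: indep_priv => i im /= /andP[h1 h2]; exists (Qr + (i - T))%N; first lia.
  split; first by rewrite MB2 ?addKn ?M'top ?eqxx //; lia.
  move=> i' i'm /andP[h3 h4] ne'; rewrite MB2 ?addKn ?M'top //; try lia.
  by rewrite (_ : (_ == _) = false) //; apply/eqP; lia.
Qed.


Lemma Sc g : (0 < g < r)%N ->
  (forall t, (t < r)%N -> indep M' r (inW r t r') (fun j => (j < r')%N)) ->
  indep M m (fun i => (m - g <= i)%N) (fun j => (n - g <= j < n)%N).
Proof.
move=> /andP[g0 gr] IH.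
have rq := rQr; have ne := nE; have me := mE; have rr := r'r; have q0 := q'0.
have nt := nT.
have I0 := IH (r - g)%N (ltac:(lia)).
case: (leqP g r') => gr'.
  have Ic : indep M' r (fun i => (r - g <= i)%N) (fun j => (r' - g <= j < r')%N).
    apply: (indep_corner (w := (r' - g)%N)).
    - lia.
    - by move=> i j h1 h2; rewrite M'top //; lia.
    - move=> i j h1 /andP[h2 h3]; rewrite M'top; last lia.
      by rewrite (_ : (_ == _) = false) //; apply/eqP; lia.
    - move=> i h; lia.
    - move=> j /andP[h1 h2]; lia.
    apply: (indep_transfer I0).
    - move=> i ir; rewrite inW_char; [|lia|lia].
      apply/idP/idP; lia.
    - move=> j jr; lia.
    - by [].
  have Is := indep_shift (M' := M) (a := T) (c := Qr) Ic.
  have : indep M (T + r) (fun i => (T <= i)%N && (r - g <= i - T)%N)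
    (fun j => (Qr <= j)%N && (r' - g <= j - Qr < r')%N).
    apply: Is => i j ir h1 h2; rewrite MB2 ?addKn //; lia.
  rewrite -me => I1; apply: (indep_transfer I1).
  - move=> i im; apply/idP/idP; lia.
  - move=> j /andP[h1 h2]; lia.
  - by [].
apply: (indep_split (A := fun i => (i < m - g + r')%N) (Q2 := fun j => (n - g <= j < Qr)%N)).
- move=> i j im /= h1 h2 /andP[h3 h4]; rewrite MB1 //; try lia.
  rewrite modQ //; last lia.
  by rewrite (_ : (_ == _) = false) //; apply/eqP; lia.
- move=> j /andP[h1 h2]; lia.
- apply: indep_priv => i im /= /andP[h1 h2]; exists (Qr - r + (i - T))%N; first lia.
  have jr : ((Qr - r + (i - T)) %% r = i - T)%N.
    rewrite modQ //; lia.
  split; first by rewrite MB1 ?jr ?eqxx //; lia.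
  move=> i' i'm /andP[h3 h4] ne'; rewrite MB1 ?jr //; try lia.
  by rewrite (_ : (_ == _) = false) //; apply/eqP; lia.
have Is := indep_shift (M' := M) (a := T) (c := Qr) I0.
have : indep M (T + r) (fun i => (T <= i)%N && inW r (r - g) r' (i - T))
    (fun j => (Qr <= j)%N && (j - Qr < r')%N).
  apply: Is => i j ir h1 h2; rewrite MB2 ?addKn //; lia.
rewrite -me => I1; apply: (indep_transfer I1).
- move=> i im /=; rewrite inW_char; [|lia|lia].
  apply/idP/idP; lia.
- move=> j /andP[h1 h2]; lia.
- by [].
Qed.

End Bottom.

Lemma top_priv m n t i i' : (0 < n)%N -> (n <= m)%N -> (t < m)%N ->
  inW m t n i -> inW m t n i' -> (i < m %/ n * n)%N -> (i' < m %/ n * n)%N ->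
  (i %% n = i' %% n)%N -> i = i'.
Proof.
move=> n0 nm tm; rewrite !inW_char // => Hi Hi'.
have me := divn_eq m n; have rn : (m %% n < n)%N by rewrite ltn_mod.
set q := (m %/ n)%N in me *.
wlog le : i i' Hi Hi' / (i <= i')%N.
  move=> W h1 h2 e; case: (leqP i i') => c; first exact: W.
  by apply/esym; apply: (W i' i Hi' Hi (ltnW c) h2 h1 (esym e)).
move=> h1 h2 /esym/eqP; rewrite eqn_mod_dvd // => /dvdnP[c e].
have qn : (q.-1 * n = q * n - n)%N by rewrite -subn1 mulnBl mul1n.
have : (i' - i < n)%N \/ (m - n < i' - i)%N by lia.
case=> h.
  have : (c * n < 1 * n)%N by lia.
  rewrite ltn_pmul2r // => c0; lia.
have : (c * n < q * n)%N by lia.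
rewrite ltn_pmul2r // => c1.
have : (q.-1 * n < c * n)%N by lia.
rewrite ltn_pmul2r // => c2; lia.
Qed.

Lemma top_indep m n t : (0 < n)%N -> (n <= m)%N -> (t < m)%N ->
  indep (Mx m n) m (predI (inW m t n) (fun i => (i < m %/ n * n)%N)) (fun j => (j < n)%N).
Proof.
move=> n0 nm tm; apply: indep_priv => i im /= /andP[h1 h2].
exists (i %% n)%N; first by rewrite ltn_mod.
split; first by rewrite /Mx A_top // eqxx.
move=> i' i'm /andP[h3 h4] ne; rewrite /Mx A_top //.
rewrite (_ : (_ == _) = false) //; apply/eqP => e; move/eqP: ne; apply.
exact: (top_priv n0 nm tm h3 h1 h4 h2 e).
Qed.


Theorem air_win m n t : (n <= m)%N -> (t < m)%N ->
  indep (Mx m n) m (inW m t n) (fun j => (j < n)%N).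
Proof.
elim/ltn_ind: m n t => m IH n t nm tm.
case: (posnP n) => [n0|n0].
  by apply: indep_empty => i _; rewrite /inW n0 ltn0 andbF.
have me := divn_eq m n; have rn : (m %% n < n)%N by rewrite ltn_mod.
set T := (m %/ n * n)%N in me *.
have I1 := top_indep n0 nm tm.
have Mt : forall i j, (i < T)%N -> Mx m n i j = (i %% n == j)%N%:R.
  by move=> i j h; rewrite /Mx A_top.
have q0 : (0 < m %/ n)%N by rewrite divn_gt0.
have nT : (n <= T)%N by rewrite /T leq_pmull.
have modT : forall i, (T - n <= i)%N -> (i < T)%N -> (i %% n = i - (T - n))%N.
  by move=> i h1 h2; rewrite /T (@modn_blk2 (m %/ n)).
have emp : (forall i, (i < m)%N -> inW m t n i -> (T <= i)%N -> False) ->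
    indep (Mx m n) m (inW m t n) (fun j => (j < n)%N).
  move=> H; apply: (indep_split (A := fun i => (i < T)%N) (Q2 := pred0)) => //.
  by apply: indep_empty => i im /= /andP[h1 h2]; apply: (H i im h1); rewrite leqNgt.
case: (posnP (m %% n)) => [r0|r0].
  by apply: emp => i im _ h; lia.
have IHr : forall t', (t' < m %% n)%N ->
    indep (Mx (m %% n) (n %% (m %% n))) (m %% n) (inW (m %% n) t' (n %% (m %% n)))
      (fun j => (j < n %% (m %% n))%N).
  move=> t' h; apply: IH => //; first lia.
  by apply: ltnW; rewrite ltn_mod.
have char := fun i => inW_char i tm nm.
case: (leqP (t + n) T) => c1.
  apply: emp => i im; rewrite char => h1 h2; lia.
case: (leqP t T) => c2.
  case: (ltnP (t + n) m) => c3.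
    apply: (indep_split (A := fun i => (i < T)%N)
       (Q2 := fun j => (j < t + n - T)%N)).
    - move=> i j im /= h1 h2 h3; rewrite Mt //; move: h1; rewrite char => h1.
      rewrite modT; [|lia|lia].
      by rewrite (_ : (_ == _) = false) //; apply/eqP; lia.
    - move=> j h; lia.
    - apply: (indep_transfer (Sa n0 nm r0 (g := (t + n - T)%N) _)); first lia.
      + move=> i im /=; rewrite char -leqNgt; apply/idP/idP; lia.
      + by [].
      + by [].
    - exact: I1.
  apply: (indep_split (A := fun i => (i < T)%N)
     (Q2 := fun j => (t + n - m <= j < t + n - m + m %% n)%N)).
  - move=> i j im /= h1 h2 /andP[h3 h4]; rewrite Mt //.
    move: h1; rewrite char => h1.
    case: (ltnP i (t + n - m)) => h5.
      rewrite modn_small; last lia.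
      by rewrite (_ : (_ == _) = false) //; apply/eqP; lia.
    rewrite modT; [|lia|lia].
    by rewrite (_ : (_ == _) = false) //; apply/eqP; lia.
  - move=> j /andP[h1 h2]; lia.
  - apply: (indep_transfer (Sb n0 nm r0 (b := (t + n - m)%N) _)); first lia.
    + move=> i im /=; rewrite char -leqNgt; apply/idP/idP; lia.
    + by [].
    + by [].
  - exact: I1.
apply: (indep_split (A := fun i => (i < T)%N)
   (Q2 := fun j => (n - (m - t) <= j < n)%N)).
- move=> i j im /= h1 h2 /andP[h3 h4]; rewrite Mt //.
  move: h1; rewrite char => h1.
  rewrite modn_small; last lia.
  by rewrite (_ : (_ == _) = false) //; apply/eqP; lia.
- move=> j /andP[h1 h2]; lia.
- apply: (indep_transfer (Sc n0 nm r0 (g := (m - t)%N) _ IHr)); first lia.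
  + move=> i im /=; rewrite char -leqNgt; apply/idP/idP; lia.
  + by [].
  + by [].
- exact: I1.
Qed.
End Air.

Local Open Scope ring_scope.

Lemma mod2 x n : (x < n + n)%N -> (x %% n = if (x < n)%N then x else x - n)%N.
Proof.
move=> h2; case: (ltnP x n) => h1; first by rewrite modn_small.
have -> : x = (n + (x - n))%N by rewrite subnKC.
rewrite modnDl modn_small; lia.
Qed.

Lemma modn_sh x c n : ((x + c * n) %% n = x %% n)%N.
Proof. by rewrite addnC modnMDl. Qed.

Lemma modh1 n t0 s : (t0 < n)%N -> (s < n)%N -> ((t0 + (s + n - t0) %% n) %% n = s)%N.
Proof.
move=> h1 h2; case: (leqP t0 s) => h3.
  have -> : (s + n - t0 = (s - t0) + 1 * n)%N by lia.
  rewrite modn_sh (modn_small (_ : s - t0 < n)%N); last lia.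
  rewrite subnKC // modn_small //.
rewrite (modn_small (_ : s + n - t0 < n)%N); last lia.
have -> : (t0 + (s + n - t0) = s + 1 * n)%N by lia.
by rewrite modn_sh modn_small.
Qed.

Lemma modh2 n t0 t : (t0 < n)%N -> (t < n)%N -> (((t0 + t) %% n + n - t0) %% n = t)%N.
Proof.
move=> h1 h2; rewrite (@mod2 (t0 + t)); last lia.
case: ifP => h3.
  have -> : (t0 + t + n - t0 = t + 1 * n)%N by lia.
  by rewrite modn_sh modn_small.
rewrite (_ : t0 + t - n + n - t0 = t)%N ?modn_small //; lia.
Qed.

Section Code.
Variable F : fieldType.
Variables K D U : nat.
Hypotheses (hUD : (U <= D)%N) (hK : (U + D + 2 <= K)%N).
Variable k : 'I_K.

Let a := a_par K D U.
Let u := u_a K D U.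
Let Dl := Delta_a K D U.
Let n := K_a K D U.
Let N := N_len K D U.

Lemma a0 : (0 < a)%N.
Proof. by rewrite /a /a_par gcdn_gt0 gcdn_gt0 ltn0Sn !orbT. Qed.
Lemma aK : K = (a * n)%N.
Proof.
by rewrite /n /K_a mulnC divnK // /a /a_par dvdn_gcdl.
Qed.
Lemma aU : U.+1 = (a * u)%N.
Proof.
rewrite /u /u_a mulnC divnK // /a /a_par.
exact: dvdn_trans (dvdn_gcdr _ _) (dvdn_gcdr _ _).
Qed.
Lemma aD : (D - U = a * Dl)%N.
Proof.
rewrite /Dl /Delta_a mulnC divnK // /a /a_par.
exact: dvdn_trans (dvdn_gcdr _ _) (dvdn_gcdl _ _).
Qed.
Lemma NE : N = (n - Dl)%N. Proof. by []. Qed.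
Lemma Dln : (Dl < n)%N.
Proof.
have := aK; have := aD; have := a0 => h0 h1 h2.
rewrite -(ltn_pmul2l h0); lia.
Qed.
Lemma aN : (a * N = K - D + U)%N.
Proof. rewrite NE mulnBr -aK -aD; lia. Qed.
Lemma uN : (u < N)%N.
Proof. have := aN; have := aU; have := a0 => h0 h1 h2; rewrite -(ltn_pmul2l h0); lia. Qed.
Lemma K0 : (0 < K)%N. Proof. lia. Qed.
Lemma n0 : (0 < n)%N. Proof. have := Dln; lia. Qed.
Lemma N0 : (0 < N)%N. Proof. have := uN; lia. Qed.
Lemma Nn : (N <= n)%N. Proof. by rewrite NE leq_subr. Qed.

Let b0 := (k %/ a)%N.
Let j0 := (k %% a)%N.
Lemma kE : (k = a * b0 + j0 :> nat)%N.
Proof. by rewrite /b0 /j0 mulnC -divn_eq. Qed.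
Lemma j0a : (j0 < a)%N. Proof. by rewrite /j0 ltn_mod a0. Qed.
Lemma b0n : (b0 < n)%N.
Proof. by rewrite /b0 ltn_divLR ?a0 // mulnC -aK. Qed.

Let t0 := ((b0 + u + Dl) %% n)%N.
Lemma t0n : (t0 < n)%N. Proof. by rewrite /t0 ltn_mod n0. Qed.
Let W := inW n t0 N.
Definition wo (t : 'I_N) : 'I_n := Ordinal (ltn_pmod (t0 + t) n0).

Lemma wo_val (t : 'I_N) : (wo t = (b0 + u + Dl + t) %% n :> nat)%N.
Proof. by rewrite /= modnDml. Qed.


Lemma known_char s : (s < n)%N -> ~~ W s -> exists2 e, (e < Dl)%N & (s = (b0 + u + e) %% n)%N.
Proof.
move=> sn; rewrite /W /inW sn /= -leqNgt => h.
have fn : ((s + n - t0) %% n < n)%N by rewrite ltn_mod n0.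
exists ((s + n - t0) %% n - N)%N; first by rewrite NE in h fn *; lia.
rewrite -{1}(modh1 t0n sn) /t0 modnDml.
set f := ((s + n - t0) %% n)%N in h fn *.
have -> : (b0 + u + Dl + f = (b0 + u + (f - N)) + 1 * n)%N by rewrite NE in h *; have := Dln; lia.
by rewrite modn_sh.
Qed.

Lemma win_reindex (R : zmodType) (G : 'I_n -> R) :
  \sum_(s < n | W s) G s = \sum_(t < N) G (wo t).
Proof.
pose h' (s : 'I_n) : 'I_N := insubd (Ordinal N0) ((s + n - t0) %% n)%N.
rewrite (reindex_onto (wo) h').
  apply: eq_bigl => t; have tn : (t < n)%N by apply: leq_trans (ltn_ord t) Nn.
  rewrite /W /inW ltn_mod n0 /= modh2 ?t0n // ltn_ord /=.
  by apply/eqP/val_inj; rewrite /h' /= val_insubd modh2 ?t0n // ltn_ord.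
move=> s; rewrite /W /inW ltn_ord /= => h; apply/val_inj.
by rewrite /= /h' val_insubd h modh1 ?t0n.
Qed.

Lemma xatE p (x : 'I_K -> 'rV[F]_p) P : xat x P = x (Ordinal (ltn_pmod P K0)).
Proof.
rewrite /xat insubT; first by rewrite ltn_pmod // K0.
by move=> h; congr x; apply: val_inj.
Qed.

Let S := side D U k.

Lemma side_plus o (l : 'I_K) : (0 < o <= D)%N -> (l = (k + o) %% K :> nat)%N -> l \in S.
Proof.
move=> /andP[o1 o2] e; rewrite /S /side inE; apply/orP; right.
apply/existsP; exists (Ordinal (o2 : o < D.+1)%N); rewrite o1 /=; exact/eqP.
Qed.

Lemma side_minus o (l : 'I_K) : (0 < o <= U)%N -> (l = (k + K - o) %% K :> nat)%N -> l \in S.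
Proof.
move=> /andP[o1 o2] e; rewrite /S /side inE; apply/orP; left.
apply/existsP; exists (Ordinal (o2 : o < U.+1)%N); rewrite o1 /=; exact/eqP.
Qed.

Lemma posL X s i j : (i <= n)%N -> (i <= X)%N -> s = (X %% n)%N ->
  ((K + a * s + j - a * i) %% K = (a * (X - i) + j) %% K)%N.
Proof.
move=> iN iX sX; have a00 := a0.
have aiK : (a * i <= K)%N by rewrite aK leq_mul2l iN orbT.
set c := (X %/ n)%N.
have hX : (a * X = c * K + a * s)%N.
  by rewrite {1}(divn_eq X n) -/c -sX mulnDr aK mulnCA.
have hXi : (a * (X - i) = a * X - a * i)%N by rewrite mulnBr.
have ai : (a * i <= a * X)%N by rewrite leq_mul2l iX orbT.
case: (leqP (a * i) (a * s)) => h.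
  have -> : (K + a * s + j - a * i = (a * s + j - a * i) + 1 * K)%N by lia.
  have -> : (a * (X - i) + j = (a * s + j - a * i) + c * K)%N by lia.
  by rewrite !modn_sh.
have c1 : (0 < c)%N.
  rewrite lt0n; apply/eqP => c0; move: hX; rewrite c0 mul0n add0n => hX; lia.
have hc : (c.-1 * K + K = c * K)%N by rewrite -[in RHS](prednK c1) mulSn addnC.
have -> : (a * (X - i) + j = (K + a * s + j - a * i) + c.-1 * K)%N by lia.
by rewrite modn_sh.
Qed.

Lemma amul d c : (d < c)%N -> (a * d + a <= a * c)%N.
Proof. by move=> h; rewrite -mulnSr leq_mul2l h orbT. Qed.
Lemma amul1 d : (0 < d)%N -> (a <= a * d)%N.
Proof. by move=> h; rewrite leq_pmulr. Qed.

Lemma ar_known d j : (0 < d)%N -> (d < u + Dl)%N -> (j < a)%N ->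
  (0 < a * d + j - j0 <= D)%N /\ (a * b0 + (a * d + j) = k + (a * d + j - j0))%N.
Proof.
move=> d0 du ja; have h1 := amul du; have h2 := amul1 d0.
have h3 := aU; have h4 := aD; have h5 := kE; have h6 := j0a.
rewrite mulnDr in h1; split; lia.
Qed.

Lemma y_known (x : 'I_K -> 'rV[F]_u) s : (forall l, l \in S -> x l = 0) ->
  (s < n)%N -> ~~ W s -> y_sym x s = 0.
Proof.
move=> x0 sn ns; have [e eD se] := known_char sn ns.
rewrite /y_sym big1 // => i _; rewrite big1 // => j _.
rewrite xatE x0 ?mxE //.
have iu := ltn_ord i; have ja := ltn_ord j.
have uN' := uN; have Nn' := Nn.
have i1 : (i <= n)%N by clear -iu uN' Nn'; lia.
have i2 : (i <= b0 + u + e)%N by clear -iu; lia.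
have hp := posL j i1 i2 se; rewrite -/a -/u in hp.
have ed : (b0 + u + e - i = b0 + (u + e - i))%N by clear -iu; lia.
rewrite ed mulnDr in hp.
have d1 : (0 < u + e - i)%N by clear -iu; lia.
have d2 : (u + e - i < u + Dl)%N by clear -iu eD; lia.
have [h1 h2] := ar_known d1 d2 ja.
apply: (side_plus (o := (a * (u + e - i) + j - j0)%N)) => //.
by rewrite /= hp -addnA h2.
Qed.

Lemma ar_plus d j : (d < u)%N -> (j < a)%N -> (j0 < a * d + j)%N ->
  (0 < a * d + j - j0 <= D)%N /\ (a * b0 + (a * d + j) = k + (a * d + j - j0))%N.
Proof.
move=> du ja jj; have h1 := amul du.
have h3 := aU; have h4 := aD; have h5 := kE; have h6 := j0a.
split; lia.
Qed.

Lemma ar_minus0 j : (j < j0)%N ->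
  (0 < j0 - j <= U)%N /\ (a * b0 + (a * 0 + j) + 1 * K = k + K - (j0 - j))%N.
Proof.
move=> jj; have h3 := aU; have h5 := kE; have h6 := j0a.
have : (a <= a * u)%N by rewrite leq_pmulr //; have := uN; lia.
rewrite muln0; split; lia.
Qed.

Lemma ar_minus d j : (0 < d)%N -> (d < u)%N -> (j < a)%N ->
  (0 < a * d + j0 - j <= U)%N /\ (a * b0 + (K - a * d + j) = k + K - (a * d + j0 - j))%N.
Proof.
move=> d0 du ja; have h1 := amul du; have h2 := amul1 d0.
have h3 := aU; have h5 := kE; have h6 := j0a; have h7 : (U.+1 <= K)%N by lia.
split; lia.
Qed.

Lemma y_want (x : 'I_K -> 'rV[F]_u) i0 : (forall l, l \in S -> x l = 0) ->
  forall (i0u : (i0 < u)%N), y_sym x ((b0 + i0) %% n) = x k 0 (Ordinal i0u).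
Proof.
move=> x0 i0u.
have uN' := uN; have Nn' := Nn; have iN : (i0 <= n)%N by clear -i0u uN' Nn'; lia.
have Z : forall (i : 'I_u) (j : 'I_a), (i != i0 :> nat) || (j != j0 :> nat) ->
    xat x (K + a * ((b0 + i0) %% n) + j - a * i)%N 0 i = 0.
  move=> i j ne; rewrite xatE x0 ?mxE //.
  have iu := ltn_ord i; have ja := ltn_ord j.
  have i1 : (i <= n)%N by clear -iu uN' Nn'; lia.
  case: (leqP i i0) => ii.
    have hp := posL j i1 (_ : i <= b0 + i0)%N (erefl ((b0 + i0) %% n)%N).
    rewrite -/a in hp; have ed : (b0 + i0 - i = b0 + (i0 - i))%N by clear -ii; lia.
    rewrite ed mulnDr in hp; have {}hp := hp ltac:(clear -ii; lia).
    have du : (i0 - i < u)%N by clear -i0u; lia.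
    case: (ltnP j0 (a * (i0 - i) + j)) => jj.
      have [h1 h2] := ar_plus du ja jj.
      apply: (side_plus (o := (a * (i0 - i) + j - j0)%N)) => //.
      by rewrite /= hp -addnA h2.
    have e0 : i = i0 :> nat.
      apply/eqP; rewrite eqn_leq ii /= leqNgt; apply/negP => lt.
      have h := amul1 (_ : 0 < i0 - i)%N; have h' := h ltac:(clear -lt; lia).
      have := j0a; clear -h' jj; lia.
    rewrite e0 eqxx /= in ne; rewrite e0 subnn in jj hp.
    have jl : (j < j0)%N by move: ne jj; clear; move=> ne jj; lia.
    have [h1 h2] := ar_minus0 jl.
    apply: (side_minus (o := (j0 - j)%N)) => //.
    by rewrite /= e0 hp -h2 -addnA modn_sh.
  have sE : ((b0 + i0) %% n = (b0 + i0 + n) %% n)%N by rewrite modnDr.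
  have hp := posL j i1 (_ : i <= b0 + i0 + n)%N sE.
  rewrite -/a in hp; have {}hp := hp ltac:(clear -i1; lia).
  have ed : (b0 + i0 + n - i = b0 + (n - (i - i0)))%N by clear -ii i1; lia.
  rewrite ed mulnDr mulnBr -aK in hp.
  have d0 : (0 < i - i0)%N by clear -ii; lia.
  have du : (i - i0 < u)%N by clear -iu; lia.
  have [h1 h2] := ar_minus d0 du ja.
  apply: (side_minus (o := (a * (i - i0) + j0 - j)%N)) => //.
  by rewrite /= hp -addnA h2.
rewrite /y_sym (bigD1 (Ordinal i0u)) //= (bigD1 (Ordinal j0a)) //=.
rewrite [X in _ + X]big1 ?addr0; last first.
  move=> i ne; apply: big1 => j _; apply: (Z i j); apply/orP; left.
  by apply: contra ne => /eqP e; apply/eqP/val_inj.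
rewrite big1 ?addr0; last first.
  move=> j ne; apply: (Z (Ordinal i0u) j); rewrite eqxx /=.
  by apply: contra ne => /eqP e; apply/eqP/val_inj.
rewrite xatE; congr (x _ _ _); apply: val_inj => /=.
have hp := posL j0 iN (leq_addl b0 i0) (erefl ((b0 + i0) %% n)%N).
by rewrite -/a in hp; rewrite hp addnK -kE modn_small.
Qed.

Lemma W_wo (t : 'I_N) : W (wo t).
Proof.
have tn : (t < n)%N by apply: leq_trans (ltn_ord t) Nn.
by rewrite /W /inW ltn_mod n0 /= modh2 ?t0n.
Qed.

Lemma wo_inj : injective wo.
Proof.
move=> t1 t2 /(congr1 val) /= e; apply: val_inj => /=.
have h1 : (t1 < n)%N by apply: leq_trans (ltn_ord t1) Nn.
have h2 : (t2 < n)%N by apply: leq_trans (ltn_ord t2) Nn.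
by rewrite -(modh2 t0n h1) -(modh2 t0n h2) e.
Qed.

Definition Lm : 'M[F]_(n, N) := AIR F n N.
Definition Msq : 'M[F]_N := \matrix_(t, c) Lm (wo t) c.
Definition Sel : 'M[F]_(N, u) := \matrix_(t, i) ((t : nat) == N - u + i)%N%:R.
Definition Dm : 'M[F]_(N, u) := invmx Msq *m Sel.

Lemma row_Msq t : row t Msq = row (wo t) Lm.
Proof. by apply/rowP => c; rewrite !mxE. Qed.

Lemma Msq_unit : Msq \in unitmx.
Proof.
rewrite -row_free_unit -kermx_eq0; apply/eqP/row_matrixP => i; rewrite row0.
set v := row i (kermx Msq).
have hv : v *m Msq = 0 by apply/sub_kermxP; exact: row_sub.
have I := air_win (F := F) Nn t0n.
pose y (s : nat) := \sum_(t' < N | (wo t' : nat) == s) v 0 t'.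
have ywo : forall t, y (wo t) = v 0 t.
  move=> t; rewrite /y (bigD1 t) //= big1 ?addr0 // => t' /andP[/eqP e ne].
  by case/eqP: ne; apply: wo_inj; apply: val_inj.
apply/rowP => t; rewrite [RHS]mxE; change (v 0 t = 0); rewrite -ywo; apply: (I y) => //; last exact: W_wo.
move=> j jN; rewrite (win_reindex (fun s : 'I_n => y s * Mx F n N s j)).
have := congr1 (fun M : 'M[F]_(1, N) => M 0 (Ordinal jN)) hv; rewrite !mxE => E; rewrite -[RHS]E.
by apply: eq_bigr => t' _; rewrite ywo !mxE.
Qed.

Lemma KL (x : 'I_K -> 'rV[F]_u) : (forall l, l \in S -> x l = 0) ->
  code x *m Dm = x k.
Proof.
move=> x0.
pose Yv : 'rV[F]_N := \row_t y_sym x (wo t).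
have cE : code x = Yv *m Msq.
  rewrite mulmx_sum_row /code (bigID (fun s : 'I_n => W s)) /=.
  rewrite [X in _ + X]big1 ?addr0; last first.
    by move=> s ns; rewrite y_known ?scale0r.
  rewrite (win_reindex (fun s : 'I_n => y_sym x s *: row s Lm)).
  by apply: eq_bigr => t _; rewrite row_Msq mxE.
rewrite /Dm cE mulmxA mulmxK ?Msq_unit //.
apply/rowP => i; rewrite !mxE.
have iN : (N - u + i < N)%N by have := uN; have := ltn_ord i; clear; lia.
rewrite (bigD1 (Ordinal iN)) //= big1 ?addr0; last first.
  move=> t ne; rewrite !mxE (_ : (_ == _) = false) ?mulr0 //.
  by apply/negbTE; apply: contra ne => /eqP e; apply/eqP/val_inj.
rewrite !mxE eqxx mulr1.
have -> : (wo (Ordinal iN) = (b0 + i) %% n :> nat)%N.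
  rewrite wo_val /=; have := uN; have := Dln; have := ltn_ord i; rewrite NE => h1 h2 h3.
  have -> : (b0 + u + Dl + (n - Dl - u + i) = b0 + i + 1 * n)%N by clear -h1 h2 h3; lia.
  by rewrite modn_sh.
rewrite (y_want x0 (ltn_ord i)); congr (x k 0 _); exact: val_inj.
Qed.

End Code.

Section Lin.
Variable F : fieldType.
Variables K D U : nat.
Let u := u_a K D U.
Let N := N_len K D U.

Lemma code_ext (x x' : 'I_K -> 'rV[F]_u) : (forall l, x l = x' l) -> code x = code x'.
Proof.
move=> h; rewrite /code; apply: eq_bigr => s _; congr (_ *: _).
rewrite /y_sym; apply: eq_bigr => i _; apply: eq_bigr => j _.
by rewrite /xat; case: insub => [l|] //=; rewrite h.
Qed.

Lemma code_add (x1 x2 : 'I_K -> 'rV[F]_u) :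
  code (fun l => x1 l + x2 l) = code x1 + code x2.
Proof.
rewrite /code -big_split; apply: eq_bigr => s _ /=; rewrite -scalerDl; congr (_ *: _).
rewrite /y_sym -big_split; apply: eq_bigr => i _ /=; rewrite -big_split; apply: eq_bigr => j _ /=.
by rewrite /xat; case: insub => [l|] /=; rewrite ?mxE ?addr0.
Qed.

Lemma code_scale c (x : 'I_K -> 'rV[F]_u) :
  code (fun l => c *: x l) = c *: code x.
Proof.
rewrite /code scaler_sumr; apply: eq_bigr => s _; rewrite scalerA; congr (_ *: _).
rewrite /y_sym mulr_sumr; apply: eq_bigr => i _; rewrite mulr_sumr; apply: eq_bigr => j _.
by rewrite /xat; case: insub => [l|] /=; rewrite ?mxE ?scaler0 ?mxE ?mulr0.
Qed.

Lemma code0 : code (fun l : 'I_K => (0 : 'rV[F]_u)) = 0.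
Proof.
rewrite -[RHS](scale0r (code (fun l : 'I_K => (0 : 'rV[F]_u)))) -code_scale.
by apply: code_ext => l; rewrite scaler0.
Qed.

Lemma code_sum (I : Type) (r : seq I) (P : pred I) (G : I -> 'I_K -> 'rV[F]_u) :
  code (fun l => \sum_(a <- r | P a) G a l) = \sum_(a <- r | P a) code (G a).
Proof.
elim: r => [|b r IH].
  by rewrite big_nil -code0; apply: code_ext => l; rewrite big_nil.
rewrite big_cons; case Pb: (P b).
  rewrite -IH -code_add; apply: code_ext => l; by rewrite big_cons Pb.
by rewrite -IH; apply: code_ext => l; rewrite big_cons Pb.
Qed.

Definition ebas (l : 'I_K) (i : 'I_u) : 'I_K -> 'rV[F]_u :=
  fun l' => if l' == l then delta_mx 0 i else 0.
Definition Cm (l : 'I_K) : 'M[F]_(u, N) := \matrix_(i, c) code (ebas l i) 0 c.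

Lemma lin_repr (x : 'I_K -> 'rV[F]_u) : code x = \sum_l x l *m Cm l.
Proof.
have -> : code x = code (fun l' => \sum_l \sum_i x l 0 i *: ebas l i l').
  apply: code_ext => l'; rewrite (bigD1 l') //= [X in _ + X]big1 ?addr0.
    by rewrite {1}(row_sum_delta (x l')); apply: eq_bigr => i _; rewrite /ebas eqxx.
  by move=> l ne; apply: big1 => i _; rewrite /ebas eq_sym (negbTE ne) scaler0.
rewrite code_sum; apply: eq_bigr => l _.
rewrite (code_sum _ _ (fun i l' => x l 0 i *: ebas l i l')) mulmx_sum_row.
apply: eq_bigr => i _; rewrite code_scale; congr (_ *: _).
by apply/rowP => c; rewrite !mxE.
Qed.

End Lin.

Lemma notin_side K D U (hK : (U + D + 2 <= K)%N) (k : 'I_K) : k \notin side D U k.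
Proof.
have kK := ltn_ord k.
rewrite /side inE negb_or; apply/andP; split; apply/negP => /existsP[t /andP[t0 /eqP e]].
  have tl := ltn_ord t; move: e; rewrite mod2; last lia.
  by case: ifP => h /= e; lia.
have tl := ltn_ord t; move: e; rewrite mod2; last lia.
by case: ifP => h /= e; lia.
Qed.

Lemma dec_all (F : fieldType) K D U : (U <= D)%N -> (U + D + 2 <= K)%N ->
  forall k : 'I_K, decodable F D U k.
Proof.
move=> hUD hK k.
exists (Dm F hUD hK k), (fun l => - (Cm F D U l *m Dm F hUD hK k)) => x.
pose xN := fun l => if l \in side D U k then 0 else x l.
have kS := notin_side hK k.
have h1 : code xN *m Dm F hUD hK k = x k.
  by rewrite (@KL F K D U hUD hK k xN) /xN ?(negbTE kS) // => l ->.
rewrite -{1}h1 !lin_repr !mulmx_suml.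
rewrite [X in _ = X + _](bigID (fun l => l \in side D U k)) /=.
rewrite [X in X = _](bigID (fun l => l \in side D U k)) /=.
rewrite big1 ?add0r; last by move=> l ls; rewrite /xN ls mul0mx mul0mx.
rewrite -addrA addrC -addrA.
have -> : \sum_(l in side D U k) x l *m - (Cm F D U l *m Dm F hUD hK k) +
   \sum_(i | i \in side D U k) x i *m Cm F D U i *m Dm F hUD hK k = 0.
  rewrite -big_split /=; apply: big1 => l _; rewrite mulmxN mulmxA addNr //.
rewrite addr0; apply: eq_bigr => l ls; by rewrite /xN (negbTE ls).
Qed.

Lemma rate K D U : (U <= D)%N -> (U + D + 2 <= K)%N ->
  ((u_a K D U)%:R / (N_len K D U)%:R = (U + 1)%:R / (K - D + U)%:R :> rat).
Proof.
move=> hUD hK.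
have ha := a0 K D U; have hu := @aU K D U; have hn := @aN K D U.
rewrite addn1 hu -(hn hUD hK) natrM natrM -mulf_div divff ?mul1r //.
by rewrite Num.Theory.pnatr_eq0 -lt0n.
Qed.

Theorem theorem1 (F : finFieldType) (K D U : nat) :
  (U <= D)%N -> (U + D + 2 <= K)%N ->
  (forall k : 'I_K, decodable F D U k) /\
  ((u_a K D U)%:R / (N_len K D U)%:R = (U + 1)%:R / (K - D + U)%:R :> rat).
Proof.
move=> hUD hK; split; [exact: dec_all | exact: rate].
Qed.
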